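(* Let $\Gamma_n = \log\log(d_n+1) - (n-1)$. Then $\Gamma_n>0$ for all $n\ge1$, and $\Gamma_{n+1}<\Gamma_n$ for all $n\ge 2$.
   Context: All logarithms $\log$ are to base $2$. A delta-matroid $(E,\mathcal F)$ consists of a finite ground set $E$ and a non-empty collection $\mathcal F$ of subsets of $E$ (the feasible sets) satisfying the symmetric exchange axiom: for all $X,Y\in\mathcal F$ and every $e\in X\triangle Y$ there exists $f\in X\triangle Y$ (possibly $f=e$) with $X\triangle\{e,f\}\in\mathcal F$. Let $d_n$ denote the number of labelled delta-matroids with ground set $[n]=\{1,\dots,n\}$, i.e. the number of collections $\mathcal F$ of subsets of $[n]$ such that $([n],\mathcal F)$ is a delta-matroid. *)

(* Defs.v *)
From mathcomp Require Import all_boot.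
From Stdlib Require Import Reals.

Set Implicit Arguments. Unset Strict Implicit. Unset Printing Implicit Defensive.

Definition symdiff (T : finType) (A B : {set T}) : {set T} := (A :\: B) :|: (B :\: A).

(* ([n], F) is a delta-matroid, with ground set 'I_n = {0,...,n-1} (a relabelling of [n]):
   F is non-empty and satisfies the symmetric exchange axiom. *)
Definition is_delta_matroid (n : nat) (F : {set {set 'I_n}}) : bool :=
  (F != set0) &&
  [forall X in F, forall Y in F, forall e in symdiff X Y,
     exists f in symdiff X Y, symdiff X [set e; f] \in F].

Definition d (n : nat) : nat := #|[set F : {set {set 'I_n}} | is_delta_matroid F]|.

Definition log2 (x : R) : R := (ln x / ln 2)%R.

Definition Gamma (n : nat) : R := (log2 (log2 (INR (d n) + 1)) - (INR n - 1))%R.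

(* Main.v *)
Require Import Defs.
From mathcomp Require Import all_boot zify.
Set Implicit Arguments. Unset Strict Implicit. Unset Printing Implicit Defensive.

Lemma in_symdiff (T : finType) (A B : {set T}) x :
  (x \in symdiff A B) = (x \in A) (+) (x \in B).
Proof. by rewrite /symdiff !inE; case: (x \in A); case: (x \in B). Qed.

Lemma symdiffK (T : finType) (X Y : {set T}) : symdiff X (symdiff X Y) = Y.
Proof. by apply/setP => x; rewrite !in_symdiff addbA addbb. Qed.

Definition tog (T : finType) (i : T) (X : {set T}) := symdiff X [set i].

Lemma odd_tog (T : finType) (i : T) X : odd #|tog i X| = ~~ odd #|X|.
Proof.
case: (boolP (i \in X)) => iX.
  have -> : tog i X = X :\ i.
    by apply/setP => x; rewrite in_symdiff !inE; case: eqP => [->|]; rewrite ?iX //; case: (x \in X).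
  rewrite (cardsD1 i X) iX /=; by case: (odd _).
have -> : tog i X = i |: X.
  apply/setP => x; rewrite in_symdiff !inE; case: eqP => [->|]; rewrite ?(negbTE iX) //.
  by case: (x \in X).
rewrite cardsU1 iX /=; by case: (odd _).
Qed.

Lemma symdiff2 (T : finType) (X : {set T}) e f :
  symdiff X [set e; f] = if e == f then tog e X else tog f (tog e X).
Proof.
case: eqP => [<-|nef]; apply/setP => x; rewrite /tog !in_symdiff !inE.
  by rewrite orbb.
case: (eqVneq x e) => [->|nxe]; last by rewrite /= addbF.
have : e != f by apply/eqP.
by move/negbTE => ->; rewrite addbF.
Qed.

Lemma odd_symdiff2 (T : finType) (X : {set T}) e f :
  odd #|symdiff X [set e; f]| = if e == f then ~~ odd #|X| else odd #|X|.
Proof. by rewrite symdiff2; case: eqP => _; rewrite !odd_tog ?negbK. Qed.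

Section Lower.
Variable n : nat.
Definition Ev : {set {set 'I_n}} := [set X : {set 'I_n} | ~~ odd #|X|].

Lemma dm_Ev (G : {set {set 'I_n}}) : G \subset ~: Ev -> is_delta_matroid (Ev :|: G).
Proof.
move=> _; apply/andP; split.
  by apply/set0Pn; exists set0; rewrite !inE cards0.
apply/forallP => X; apply/implyP => XF; apply/forallP => Y; apply/implyP => YF.
apply/forallP => e; apply/implyP => eXY.
case: (boolP (odd #|X|)) => oX.
  apply/existsP; exists e; rewrite eXY /= !inE.
  by rewrite odd_symdiff2 eqxx oX.
case: (set0Pn (symdiff X Y :\ e)) => [[f]|h0].
  rewrite in_setD1 => /andP [nfe fXY].
  apply/existsP; exists f; rewrite fXY /= !inE odd_symdiff2.
  by rewrite eq_sym (negbTE nfe) oX.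
apply/existsP; exists e; rewrite eXY /=.
have -> : symdiff X [set e; e] = Y; last by [].
rewrite setUid -[in RHS](symdiffK X Y); congr symdiff.
apply/setP => x; rewrite inE; case: eqP => [->|/eqP nxe]; first by rewrite eXY.
apply/esym/negbTE/negP => xXY; apply: h0; exists x; by rewrite in_setD1 nxe xXY.
Qed.
End Lower.

Lemma card_odd m : 2 ^ m <= #|~: Ev m.+1|.
Proof.
have tinj : injective (tog (ord0 : 'I_m.+1)).
  move=> X Y h; apply/setP => x; move/setP: h => /(_ x); rewrite /tog !in_symdiff.
  by case: (x \in X); case: (x \in Y); case: (x \in [set ord0]).
have le : #|Ev m.+1| <= #|~: Ev m.+1|.
  rewrite -(card_in_imset (f := tog ord0) (D := Ev m.+1)); last by move=> X Y _ _; apply: tinj.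
  apply: subset_leq_card; apply/subsetP => Z /imsetP [X XE ->].
  by move: XE; rewrite !inE odd_tog negbK.
have tot : #|Ev m.+1| + #|~: Ev m.+1| = 2 ^ m.+1.
  by rewrite cardsC -cardsT -powersetT card_powerset cardsT card_ord.
rewrite expnS in tot; lia.
Qed.

Lemma d_lower m : 2 ^ (2 ^ m) <= d m.+1.
Proof.
apply: (leq_trans (n := 2 ^ #|~: Ev m.+1|)); first by rewrite leq_exp2l // card_odd.
rewrite -card_powerset /d.
rewrite -(card_in_imset (f := fun G => Ev m.+1 :|: G) (D := powerset (~: Ev m.+1))).
  apply: subset_leq_card; apply/subsetP => F /imsetP [G GP ->].
  by rewrite inE; apply: dm_Ev; rewrite inE in GP.
move=> G1 G2; rewrite !inE => /subsetP s1 /subsetP s2 h.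
apply/setP => x; move/setP: h => /(_ x).
move: (s1 x) (s2 x); rewrite !in_setU !in_setC.
case: (x \in G1); case: (x \in G2); case: (x \in Ev m.+1) => //= a b c.
- by have := a isT.
Qed.

Section Upper.
Variable n : nat.
Definition ext (Y : {set 'I_n}) (b : bool) : {set 'I_n.+1} :=
  [set j | if unlift ord_max j is Some i then i \in Y else b].
Definition Fb (F : {set {set 'I_n.+1}}) b : {set {set 'I_n}} := [set Y | ext Y b \in F].
Definition res (X : {set 'I_n.+1}) : {set 'I_n} := [set i | lift ord_max i \in X].

Lemma in_ext_lift Y b i : (lift ord_max i \in ext Y b) = (i \in Y).
Proof. by rewrite inE liftK. Qed.
Lemma in_ext_max Y b : (ord_max \in ext Y b) = b.
Proof. by rewrite inE unlift_none. Qed.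

Lemma ext_res X : ext (res X) (ord_max \in X) = X.
Proof.
apply/setP => j; case: (unliftP ord_max j) => [i ->|->].
  by rewrite in_ext_lift inE.
by rewrite in_ext_max.
Qed.

Lemma ext_sym Y e f b :
  symdiff (ext Y b) [set lift ord_max e; lift ord_max f] = ext (symdiff Y [set e; f]) b.
Proof.
apply/setP => j; case: (unliftP ord_max j) => [i ->|->].
  by rewrite in_symdiff !in_ext_lift in_symdiff !inE !(inj_eq lift_inj).
rewrite in_symdiff !in_ext_max !inE.
by rewrite !eq_liftF addbF.
Qed.

Lemma dm_Fb F b : is_delta_matroid F -> Fb F b != set0 -> is_delta_matroid (Fb F b).
Proof.
move=> /andP [_ /forallP H] ne; apply/andP; split => //.
apply/forallP => Y1; apply/implyP; rewrite inE => Y1F.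
apply/forallP => Y2; apply/implyP; rewrite inE => Y2F.
apply/forallP => e; apply/implyP => eY.
move: (H (ext Y1 b)) => /implyP /(_ Y1F) /forallP /(_ (ext Y2 b)) /implyP /(_ Y2F).
move=> /forallP /(_ (lift ord_max e)) /implyP.
rewrite in_symdiff !in_ext_lift -in_symdiff => /(_ eY) /existsP [f' /andP [f'Y f'F]].
move: f'Y f'F; case: (unliftP ord_max f') => [f ->|->].
  rewrite in_symdiff !in_ext_lift -in_symdiff => fY.
  rewrite ext_sym => h; apply/existsP; exists f; by rewrite fY inE.
by rewrite in_symdiff !in_ext_max addbb.
Qed.

Lemma Fb_inj F G : Fb F false = Fb G false -> Fb F true = Fb G true -> F = G.
Proof.
move=> h0 h1; apply/setP => X; rewrite -(ext_res X).
case: (ord_max \in X).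
  by move/setP: h1 => /(_ (res X)); rewrite !inE.
by move/setP: h0 => /(_ (res X)); rewrite !inE.
Qed.

Lemma Fb_nonempty F : is_delta_matroid F -> (Fb F false != set0) || (Fb F true != set0).
Proof.
move=> /andP [/set0Pn [X XF] _].
have : res X \in Fb F (ord_max \in X) by rewrite inE ext_res.
case: (ord_max \in X) => h; apply/orP; [right|left]; apply/set0Pn; by exists (res X).
Qed.

Lemma res_in (F : {set {set 'I_n.+1}}) X : X \in F -> res X \in Fb F (ord_max \in X).
Proof. by rewrite inE ext_res. Qed.

Lemma Fb_bad F : 1 < n -> is_delta_matroid F ->
  ~ (Fb F false = [set set0] /\ Fb F true = [set setT]).
Proof.
move=> n1 /andP [_ /forallP H] [h0 h1].
have X0 : ext set0 false \in F.
  have : (set0 : {set 'I_n}) \in Fb F false by rewrite h0 inE.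
  by rewrite inE.
have X1 : ext setT true \in F.
  have : (setT : {set 'I_n}) \in Fb F true by rewrite h1 inE.
  by rewrite inE.
move: (H (ext set0 false)) => /implyP /(_ X0) /forallP /(_ (ext setT true)) /implyP /(_ X1).
move=> /forallP /(_ ord_max) /implyP.
rewrite in_symdiff !in_ext_max => /(_ isT) /existsP [f' /andP [_ f'F]].
have i0 : 0 < n by lia.
have nz : forall (S : {set 'I_n}) (i : 'I_n), S = setT -> i \in S.
  by move=> S i ->; rewrite inE.
move: f'F; case: (unliftP ord_max f') => [f ->|->] h.
- have := res_in h.
  rewrite in_symdiff in_ext_max in_set2 eqxx /= h1 inE => /eqP Hs.
  pose g : 'I_n := if val f == 0 then Ordinal n1 else Ordinal i0.
  have := nz _ g Hs; rewrite inE in_symdiff in_ext_lift !inE.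
  rewrite [lift _ _ == ord_max]eq_sym eq_liftF (inj_eq lift_inj) /=.
  rewrite /g; case: (val f =P 0) => [f0|fn0] /eqP Hg; [move: f0 | apply: fn0]; by rewrite -Hg.
- have := res_in h.
  rewrite in_symdiff in_ext_max in_set2 eqxx /= h1 inE => /eqP Hs.
  have := nz _ (Ordinal i0) Hs; rewrite inE in_symdiff in_ext_lift !inE.
  by rewrite [lift _ _ == _]eq_sym eq_liftF.
Qed.
End Upper.

Lemma dm1 k (S : {set 'I_k}) : is_delta_matroid [set S].
Proof.
apply/andP; split; first by apply/set0Pn; exists S; rewrite inE.
apply/forallP => X; apply/implyP; rewrite inE => /eqP ->.
apply/forallP => Y; apply/implyP; rewrite inE => /eqP ->.
by apply/forallP => e; apply/implyP; rewrite in_symdiff addbb.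
Qed.

Lemma d_upper n : 1 < n -> d n.+1 + 2 <= (d n + 1) * (d n + 1).
Proof.
move=> n1.
pose DM k := [set F : {set {set 'I_k}} | is_delta_matroid F].
pose D0 := set0 |: DM n.
have cD0 : #|D0| = d n + 1.
  rewrite cardsU1 addnC; congr (_ + _); rewrite inE.
  by rewrite /is_delta_matroid eqxx.
pose phi (F : {set {set 'I_n.+1}}) := (Fb F false, Fb F true).
pose bad := ([set set0], [set setT]) : {set {set 'I_n}} * {set {set 'I_n}}.
pose P := (setX D0 D0 :\ (set0, set0)) :\ bad.
have inD0 : forall F b, is_delta_matroid F -> Fb F b \in D0.
  move=> F b dF; rewrite !inE; case: eqP => //= /eqP ne.
  exact: dm_Fb.
have cP : #|P| + 2 = #|D0| * #|D0|.
  rewrite -cardsX (cardsD1 (set0, set0) (setX D0 D0)) (cardsD1 bad (setX D0 D0 :\ (set0,set0))).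
  have b1 : bad \in setX D0 D0 :\ (set0, set0).
    rewrite !inE !dm1 !orbT !andbT; apply/eqP => [[h _]].
    by move/setP: h => /(_ set0); rewrite !inE eqxx.
  have b0 : (set0, set0) \in setX D0 D0 by rewrite !inE eqxx.
  by rewrite b0 b1 /= addnC.
rewrite -cD0 -cP leq_add2r.
have -> : d n.+1 = #|phi @: DM n.+1|.
  rewrite card_in_imset // => F G _ _ [h0 h1]; exact: Fb_inj.
apply: subset_leq_card; apply/subsetP => p /imsetP [F]; rewrite inE => dF ->.
rewrite /phi.
rewrite !in_setD1 in_setX /= !inD0 // !andbT.
apply/andP; split.
  apply/negP => /eqP [h0 h1]; exact: (Fb_bad n1 dF (conj h0 h1)).
move: (Fb_nonempty dF); apply: contraL => /eqP [-> ->].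
by rewrite eqxx.
Qed.

Lemma d_pos m : (1 <= d m.+1)%N.
Proof. apply: leq_trans (d_lower m); by rewrite expn_gt0. Qed.

From Stdlib Require Import Reals Lra.
Open Scope R_scope.

Lemma ln2_pos : 0 < ln 2.
Proof. have := ln_lt_2; lra. Qed.

Lemma log2_lt x y : 0 < x -> x < y -> log2 x < log2 y.
Proof.
move=> hx hxy; rewrite /log2 /Rdiv.
apply: Rmult_lt_compat_r; first by apply: Rinv_0_lt_compat; exact: ln2_pos.
exact: ln_increasing.
Qed.

Lemma log2_pow2 k : log2 (2 ^ k) = INR k.
Proof.
rewrite /log2 ln_pow; last lra.
have := ln2_pos => h; field; lra.
Qed.

Lemma log2_gt (k : nat) x : 2 ^ k < x -> INR k < log2 x.
Proof.
move=> h; rewrite -log2_pow2; apply: log2_lt => //; apply: pow_lt; lra.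
Qed.

Lemma log2_mult2 x : 0 < x -> log2 (2 * x) = 1 + log2 x.
Proof.
move=> hx; rewrite /log2 ln_mult; [|lra|lra].
have := ln2_pos => h; field; lra.
Qed.

Lemma log2_sq x : 0 < x -> log2 (x * x) = 2 * log2 x.
Proof. move=> hx; rewrite /log2 ln_mult //; lra. Qed.

Lemma INR2 : INR 2 = 2.
Proof. simpl; lra. Qed.

Lemma INR_expn a b : INR (expn a b) = INR a ^ b.
Proof.
elim: b => [|b IH]; first by rewrite expn0.
by rewrite expnS -multE mult_INR IH.
Qed.


Theorem theorem3p5 :
  (forall n : nat, (1 <= n)%coq_nat -> (0 < Gamma n)%R) /\
  (forall n : nat, (2 <= n)%coq_nat -> (Gamma (S n) < Gamma n)%R).
Proof.
split.
  case=> [|m] hm; first by exfalso; lia.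
  rewrite /Gamma S_INR.
  suff : INR m < log2 (log2 (INR (d m.+1) + 1)) by lra.
  apply: log2_gt.
  have -> : 2 ^ m = INR (expn 2 m) by rewrite INR_expn INR2.
  apply: log2_gt.
  have h := d_lower m; move/leP: h => /le_INR; rewrite !INR_expn INR2; lra.
case=> [|[|n]] hn; try (exfalso; lia).
set N := n.+2.
have hu := @d_upper N isT.
have hp1 := d_pos N.
have hp0 := d_pos n.+1.
move/leP: hu => /le_INR; rewrite -multE -!plusE mult_INR !plus_INR => hu.
move/leP: hp1 => /le_INR => hp1.
move/leP: hp0 => /le_INR => hp0.
rewrite /= in hu hp1 hp0.
rewrite /Gamma S_INR.
set D := INR (d N) in hu hp0 *.
set D' := INR (d N.+1) in hu hp1 *.
suff : log2 (log2 (D' + 1)) < 1 + log2 (log2 (D + 1)) by lra.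
have L0 : 0 < log2 (D + 1).
  have := @log2_gt 0%nat (D + 1); rewrite /=; lra.
have L1 : 0 < log2 (D' + 1).
  have := @log2_gt 0%nat (D' + 1); rewrite /=; lra.
rewrite -log2_mult2 //; apply: log2_lt => //.
rewrite -log2_sq; last lra.
apply: log2_lt; lra.
Qed.
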